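(* Let $b>1$, $L>\pi$, and $\bar a\in\left(0,1-\frac{\pi^2}{L^2}\right)$. Then there exists a pair $(\phi,\psi)$ solving $$-\phi''=\phi(1-\phi-\bar a\psi),\quad -\psi''=\psi(1-b\phi-\psi)\ \text{ in }(0,L),\qquad \phi(0)=\phi(L)=0,\ \psi(0)=\psi(L)=1,$$ with $0<\phi(x)<1$ and $0<\psi(x)<1$ for all $x\in(0,L)$. *)

(* Defs.v *)
From Stdlib Require Import Reals.
From Coquelicot Require Import Coquelicot.
Open Scope R_scope.

Definition classical_C2 (L : R) (f f1 f2 : R -> R) : Prop :=
  (forall x, 0 <= x <= L -> continuous f x) /\
  (forall x, 0 < x < L ->
     is_derive f x (f1 x) /\ is_derive f1 x (f2 x) /\ continuous f2 x).

(* Main.v *)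
Require Import Defs.
From Stdlib Require Import Reals.
From Coquelicot Require Import Coquelicot.
Open Scope R_scope.
From Stdlib Require Import Lra Psatz Lia.

Open Scope R_scope.

Definition Sh t := (exp t - exp (-t)) / 2.
Definition Ch t := (exp t + exp (-t)) / 2.

Lemma Sh_add a c : Sh (a + c) = Sh a * Ch c + Ch a * Sh c.
Proof. unfold Sh, Ch. rewrite Ropp_plus_distr, !exp_plus. field. Qed.

Lemma Sh_pos t : 0 < t -> 0 < Sh t.
Proof. intros. unfold Sh. assert (exp (-t) < exp t) by (apply exp_increasing; lra). lra. Qed.
Lemma Sh_0 : Sh 0 = 0.
Proof. unfold Sh. rewrite Ropp_0. lra. Qed.
Lemma exp_le a c : a <= c -> exp a <= exp c.
Proof. intros. destruct (Req_dec a c). subst; lra. left; apply exp_increasing; lra. Qed.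
Lemma Sh_incr a c : a <= c -> Sh a <= Sh c.
Proof. intros. unfold Sh. pose proof (exp_le a c H). pose proof (exp_le (-c) (-a) ltac:(lra)). lra. Qed.
Lemma Ch_pos t : 0 < Ch t.
Proof. unfold Ch. pose proof (exp_pos t). pose proof (exp_pos (-t)). lra. Qed.
Lemma Sh_bnd t T : 0 <= t <= T -> 0 <= Sh t <= exp T.
Proof. intros. unfold Sh. pose proof (exp_le t T ltac:(lra)). pose proof (exp_le (-t) t ltac:(lra)).
 pose proof (exp_pos (-t)). lra. Qed.
Lemma Ch_bnd t T : 0 <= t <= T -> 0 <= Ch t <= exp T.
Proof. intros. unfold Ch. pose proof (exp_le t T ltac:(lra)). pose proof (exp_le (-t) t ltac:(lra)).
 pose proof (exp_pos (-t)). lra. Qed.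

Lemma is_derive_s1 m x : is_derive (fun y => Sh (m * y)) x (m * Ch (m * x)).
Proof. unfold Sh, Ch. auto_derive; auto. unfold Rminus. field. Qed.
Lemma is_derive_s2 m L x : is_derive (fun y => Sh (m * (L - y))) x (- m * Ch (m * (L - x))).
Proof. unfold Sh, Ch. auto_derive; auto. unfold Rminus. field. Qed.
Lemma is_derive_c1 m x : is_derive (fun y => m * Ch (m * y)) x (m * m * Sh (m * x)).
Proof. unfold Sh, Ch. auto_derive; auto. unfold Rminus. field. Qed.
Lemma is_derive_c2 m L x : is_derive (fun y => - m * Ch (m * (L - y))) x (m * m * Sh (m * (L - x))).
Proof. unfold Sh, Ch. auto_derive; auto. unfold Rminus. field. Qed.
Lemma der_comb (a b c d : R -> R) da db dc dd x K :
  is_derive a x da -> is_derive b x db -> is_derive c x dc -> is_derive d x dd ->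
  is_derive (fun y => (a y * b y + c y * d y) * K) x ((da * b x + a x * db + (dc * d x + c x * dd)) * K).
Proof.
  intros Ha Hb Hc Hd. apply is_derive_Reals in Ha, Hb, Hc, Hd. apply is_derive_Reals.
  pose proof (derivable_pt_lim_mult _ _ _ _ _ Ha Hb) as H1.
  pose proof (derivable_pt_lim_mult _ _ _ _ _ Hc Hd) as H2.
  pose proof (derivable_pt_lim_plus _ _ _ _ _ H1 H2) as H3.
  pose proof (derivable_pt_lim_mult _ _ _ _ _ H3 (derivable_pt_lim_const K x)) as H4.
  unfold fct_cte, mult_fct, plus_fct in H4. 
  replace ((da * b x + a x * db + (dc * d x + c x * dd)) * K) with
    ((da * b x + a x * db + (dc * d x + c x * dd)) * K + (a x * b x + c x * d x) * 0) by ring.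
  exact H4.
Qed.

Lemma lip_cont (f : R -> R) K : (forall x y, Rabs (f x - f y) <= K * Rabs (x - y)) -> forall x, continuous f x.
Proof.
  intros H x. apply continuity_pt_filterlim.
  unfold continuity_pt, continue_in, limit1_in, limit_in. intros eps Heps.
  exists (eps / (Rabs K + 1)). split. apply Rdiv_lt_0_compat; auto. pose proof (Rabs_pos K); lra.
  intros y [_ Hy]. unfold R_dist in *. simpl in *. unfold R_dist in *.
  eapply Rle_lt_trans. apply H.
  pose proof (Rabs_pos K). pose proof (Rabs_pos (y - x)).
  apply Rle_lt_trans with (Rabs K * Rabs (y - x)). apply Rmult_le_compat_r; auto. apply Rle_abs.
  apply Rle_lt_trans with ((Rabs K + 1) * Rabs (y-x)). nra.
  apply Rmult_lt_compat_l with (r := Rabs K + 1) in Hy; [|lra].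
  replace ((Rabs K + 1) * (eps / (Rabs K + 1))) with eps in Hy by (field; lra). lra.
Qed.

Lemma der_cpt f x l : is_derive f x l -> continuity_pt f x.
Proof. intros H. apply continuity_pt_filterlim. apply (ex_derive_continuous (K:=R_AbsRing) (V:=R_NormedModule)). exists l; auto. Qed.

Lemma mvt f df a b : a < b -> (forall x, a <= x <= b -> is_derive f x (df x)) ->
  exists c, a <= c <= b /\ f b - f a = df c * (b - a).
Proof.
  intros Hab H. destruct (MVT_gen f a b df) as [c [Hc E]].
  - intros x Hx. rewrite Rmin_left, Rmax_right in Hx by lra. apply H; lra.
  - intros x Hx. rewrite Rmin_left, Rmax_right in Hx by lra. apply (der_cpt f x (df x)). apply H; lra.
  - rewrite Rmin_left, Rmax_right in Hc by lra. exists c; auto.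
Qed.

Lemma maxp k L (w w1 w2 : R -> R) : 0 < k -> 0 < L ->
  (forall x, 0 <= x <= L -> continuity_pt w x) ->
  (forall x, 0 < x < L -> is_derive w x (w1 x) /\ is_derive w1 x (w2 x)) ->
  (forall x, 0 < x < L -> k * w x <= w2 x) -> w 0 <= 0 -> w L <= 0 ->
  forall x, 0 <= x <= L -> w x <= 0.
Proof.
  intros Hk HL Hc Hd H2 H0 HL0 x0 Hx0.
  destruct (Rle_dec (w x0) 0) as [|Hpos]; auto. exfalso. apply Rnot_le_lt in Hpos.
  destruct (continuity_ab_maj w 0 L ltac:(lra) Hc) as [c [Hmax Hcin]].
  pose proof (Hmax x0 Hx0).
  assert (c <> 0) by (intro; subst; lra). assert (c <> L) by (intro; subst; lra).
  assert (Hcc : 0 < c < L) by lra.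
  pose proof (Hc c ltac:(lra)) as Hcont.
  unfold continuity_pt, continue_in, limit1_in, limit_in in Hcont.
  destruct (Hcont (w c / 2) ltac:(lra)) as [alp [Halp Hal]].
  set (d := Rmin alp (Rmin c (L - c)) / 2).
  assert (Hd0 : 0 < d). { unfold d. unfold Rmin; repeat destruct Rle_dec; lra. }
  assert (Hd1 : d < alp /\ d < c /\ d < L - c).
  { unfold d. pose proof (Rmin_l alp (Rmin c (L - c))). pose proof (Rmin_r alp (Rmin c (L - c))).
    pose proof (Rmin_l c (L - c)). pose proof (Rmin_r c (L - c)). lra. }
  assert (Hw2 : forall y, c - d <= y <= c + d -> 0 < w2 y).
  { intros y Hy. assert (0 < w y).
    { destruct (Req_dec y c). subst; lra.
      assert (Hy2 : Rabs (w y - w c) < w c / 2).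
      { apply (Hal y). split. split; [exact I | intro; apply H4; auto]. simpl. unfold R_dist. apply Rabs_def1; lra. }
      apply Rabs_def2 in Hy2. lra. }
    pose proof (H2 y ltac:(lra)). nra. }
  assert (Hinc : forall s t, c - d <= s -> s < t -> t <= c + d -> w1 s < w1 t).
  { intros s t Hs Hst Ht. destruct (mvt w1 w2 s t Hst) as [xi [Hxi E]].
    intros; apply Hd; lra. pose proof (Hw2 xi ltac:(lra)). nra. }
  assert (Hw1 : forall s, 0 < s < L -> is_derive w s (w1 s)) by (intros; apply Hd; auto).
  destruct (Rle_dec 0 (w1 c)) as [Hp|Hn].
  - destruct (mvt w w1 c (c + d/2) ltac:(lra)) as [x1 [Hx1 E1]]. intros; apply Hw1; lra.
    destruct (mvt w w1 (c + d/2) (c + d) ltac:(lra)) as [x2 [Hx2 E2]]. intros; apply Hw1; lra.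
    assert (w1 c <= w1 x1). { destruct (Req_dec x1 c). subst; lra. left; apply Hinc; lra. }
    assert (w1 c < w1 x2) by (apply Hinc; lra).
    pose proof (Hmax (c + d) ltac:(lra)). nra.
  - apply Rnot_le_lt in Hn.
    destruct (mvt w w1 (c - d/2) c ltac:(lra)) as [x1 [Hx1 E1]]. intros; apply Hw1; lra.
    destruct (mvt w w1 (c - d) (c - d/2) ltac:(lra)) as [x2 [Hx2 E2]]. intros; apply Hw1; lra.
    assert (w1 x1 <= w1 c). { destruct (Req_dec x1 c). subst; lra. left; apply Hinc; lra. }
    assert (w1 x2 < w1 c) by (apply Hinc; lra).
    pose proof (Hmax (c - d) ltac:(lra)). nra.
Qed.

Lemma der_minus (f g : R -> R) x df dg : is_derive f x df -> is_derive g x dg -> is_derive (fun y => f y - g y) x (df - dg).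
Proof. intros Hf Hg. apply is_derive_Reals in Hf, Hg. apply is_derive_Reals. apply (derivable_pt_lim_minus _ _ _ _ _ Hf Hg). Qed.
Lemma der_plus (f g : R -> R) x df dg : is_derive f x df -> is_derive g x dg -> is_derive (fun y => f y + g y) x (df + dg).
Proof. intros Hf Hg. apply is_derive_Reals in Hf, Hg. apply is_derive_Reals. apply (derivable_pt_lim_plus _ _ _ _ _ Hf Hg). Qed.
Lemma der_scal (f : R -> R) c x df : is_derive f x df -> is_derive (fun y => c * f y) x (c * df).
Proof. intros Hf. apply is_derive_Reals in Hf. apply is_derive_Reals. apply (derivable_pt_lim_scal _ _ _ _ Hf). Qed.
Lemma der_const c x : is_derive (fun _ => c) x 0.
Proof. apply is_derive_Reals. apply derivable_pt_lim_const. Qed.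
Section Green.
Variables m L : R.
Hypothesis Hm : 0 < m.
Hypothesis HL : 0 < L.

Lemma is_derive_eq (f : R -> R) x l l' : is_derive f x l -> l = l' -> is_derive f x l'.
Proof. intros; subst; auto. Qed.

Definition cl x := Rmin L (Rmax 0 x).
Lemma cl_in x : 0 <= x <= L -> cl x = x.
Proof. intros. unfold cl, Rmin, Rmax. repeat destruct Rle_dec; lra. Qed.
Lemma cl_bnd x : 0 <= cl x <= L.
Proof. unfold cl, Rmin, Rmax. repeat destruct Rle_dec; lra. Qed.
Lemma cl_lip x y : Rabs (cl x - cl y) <= 1 * Rabs (x - y).
Proof. unfold cl, Rmin, Rmax. rewrite Rmult_1_l. repeat destruct Rle_dec; unfold Rabs; repeat destruct Rcase_abs; lra. Qed.
Lemma cl_cont x : continuous cl x.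
Proof. apply (lip_cont cl 1). apply cl_lip. Qed.

Definition s1 x := Sh (m * x).
Definition s2 x := Sh (m * (L - x)).
Definition d1 x := m * Ch (m * x).
Definition d2 x := - m * Ch (m * (L - x)).
Definition DD := m * Sh (m * L).
Lemma DD_pos : 0 < DD.
Proof. unfold DD. apply Rmult_lt_0_compat; auto. apply Sh_pos. nra. Qed.

Definition I1 (g : R -> R) x := RInt (fun y => s1 y * g (cl y)) 0 x.
Definition I2 (g : R -> R) x := RInt (fun y => s2 y * g (cl y)) x L.
Definition Gop g x := (s2 x * I1 g x + s1 x * I2 g x) * / DD.
Definition G1 g x := (d2 x * I1 g x + d1 x * I2 g x) * / DD.

Definition gcont (g : R -> R) := forall y, continuous (fun z => g (cl z)) y.

Lemma s1_der x : is_derive s1 x (d1 x). Proof. apply is_derive_s1. Qed.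
Lemma s2_der x : is_derive s2 x (d2 x). Proof. apply is_derive_s2. Qed.
Lemma d1_der x : is_derive d1 x (m * m * s1 x). Proof. apply is_derive_c1. Qed.
Lemma d2_der x : is_derive d2 x (m * m * s2 x). Proof. apply is_derive_c2. Qed.
Lemma s1_cont x : continuous s1 x. Proof. apply (ex_derive_continuous (K:=R_AbsRing) (V:=R_NormedModule)). eexists; apply s1_der. Qed.
Lemma s2_cont x : continuous s2 x. Proof. apply (ex_derive_continuous (K:=R_AbsRing) (V:=R_NormedModule)). eexists; apply s2_der. Qed.

Lemma f1_cont g : gcont g -> forall y, continuous (fun y => s1 y * g (cl y)) y.
Proof. intros Hg y. apply (continuous_mult s1 (fun z => g (cl z))). apply s1_cont. apply Hg. Qed.
Lemma f2_cont g : gcont g -> forall y, continuous (fun y => s2 y * g (cl y)) y.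
Proof. intros Hg y. apply (continuous_mult s2 (fun z => g (cl z))). apply s2_cont. apply Hg. Qed.

Lemma ex1 g : gcont g -> forall a c, ex_RInt (fun y => s1 y * g (cl y)) a c.
Proof. intros. apply (ex_RInt_continuous (V:=R_CompleteNormedModule)). intros; apply f1_cont; auto. Qed.
Lemma ex2 g : gcont g -> forall a c, ex_RInt (fun y => s2 y * g (cl y)) a c.
Proof. intros. apply (ex_RInt_continuous (V:=R_CompleteNormedModule)). intros; apply f2_cont; auto. Qed.

Lemma I1_der g : gcont g -> forall x, is_derive (I1 g) x (s1 x * g (cl x)).
Proof.
  intros Hg x. apply (is_derive_RInt (V:=R_NormedModule) (fun y => s1 y * g (cl y)) (I1 g) 0 x).
  - apply filter_forall. intros c. apply (RInt_correct (V:=R_CompleteNormedModule)). apply ex1; auto.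
  - apply f1_cont; auto.
Qed.
Lemma I2_der g : gcont g -> forall x, is_derive (I2 g) x (- (s2 x * g (cl x))).
Proof.
  intros Hg x. apply (is_derive_RInt' (V:=R_NormedModule) (fun y => s2 y * g (cl y)) (I2 g) x L).
  - apply filter_forall. intros c. apply (RInt_correct (V:=R_CompleteNormedModule)). apply ex2; auto.
  - apply f2_cont; auto.
Qed.

Lemma wronsk x : d2 x * s1 x - d1 x * s2 x = - DD.
Proof.
  unfold d1, d2, s1, s2, DD. replace (m * L) with (m * x + m * (L - x)) by ring.
  rewrite Sh_add. ring.
Qed.

Lemma Gop_der g : gcont g -> forall x, is_derive (Gop g) x (G1 g x).
Proof.
  intros Hg x. unfold Gop.
  eapply is_derive_eq.
  apply (der_comb s2 (I1 g) s1 (I2 g)); [apply s2_der|apply I1_der|apply s1_der|apply I2_der]; auto.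
  unfold G1. apply f_equal2; auto. ring.
Qed.

Lemma G1_der g : gcont g -> forall x, is_derive (G1 g) x (m * m * Gop g x - g (cl x)).
Proof.
  intros Hg x. unfold G1.
  eapply is_derive_eq.
  apply (der_comb d2 (I1 g) d1 (I2 g)); [apply d2_der|apply I1_der|apply d1_der|apply I2_der]; auto.
  unfold Gop. pose proof (wronsk x). pose proof DD_pos.
  replace (- (s2 x * g (cl x))) with (- s2 x * g (cl x)) by ring.
  apply Rminus_diag_uniq.
  replace ((m * m * s2 x * I1 g x + d2 x * (s1 x * g (cl x)) + (m * m * s1 x * I2 g x + d1 x * (- s2 x * g (cl x)))) * / DD -
   (m * m * ((s2 x * I1 g x + s1 x * I2 g x) * / DD) - g (cl x))) with
   ((d2 x * s1 x - d1 x * s2 x) * g (cl x) * / DD + g (cl x)) by ring.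
  rewrite H. field. lra.
Qed.

Lemma Gop_0 g : Gop g 0 = 0.
Proof. unfold Gop, I1, s1. rewrite RInt_point. replace (m * 0) with 0 by ring. rewrite Sh_0. unfold zero; simpl. ring. Qed.
Lemma Gop_L g : Gop g L = 0.
Proof. unfold Gop, I2, s2. rewrite RInt_point. replace (m * (L - L)) with 0 by ring. rewrite Sh_0. unfold zero; simpl. ring. Qed.

Definition EE := exp (m * L).
Lemma s1_bnd y : 0 <= y <= L -> 0 <= s1 y <= EE.
Proof. intros. unfold s1, EE. apply Sh_bnd. split; nra. Qed.
Lemma s2_bnd y : 0 <= y <= L -> 0 <= s2 y <= EE.
Proof. intros. unfold s2, EE. apply Sh_bnd. split; nra. Qed.
Lemma d1_bnd y : 0 <= y <= L -> Rabs (d1 y) <= m * EE.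
Proof. intros. unfold d1, EE. pose proof (Ch_bnd (m*y) (m * L) ltac:(split; nra)).
  rewrite Rabs_pos_eq; nra. Qed.
Lemma d2_bnd y : 0 <= y <= L -> Rabs (d2 y) <= m * EE.
Proof. intros. unfold d2, EE. pose proof (Ch_bnd (m*(L-y)) (m * L) ltac:(split; nra)).
  rewrite Rabs_left1; nra. Qed.

Lemma I1_bnd g A : gcont g -> (forall y, 0 <= y <= L -> Rabs (g y) <= A) ->
  forall x, 0 <= x <= L -> Rabs (I1 g x) <= L * (EE * A).
Proof.
  intros Hg HA x Hx. unfold I1. eapply Rle_trans. apply (abs_RInt_le_const _ 0 x (EE * A)). lra. apply ex1; auto.
  intros t Ht. rewrite Rabs_mult. rewrite cl_in by lra. pose proof (s1_bnd t ltac:(lra)).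
  rewrite (Rabs_pos_eq (s1 t)) by lra. apply Rmult_le_compat; [lra | apply Rabs_pos | lra | apply HA; lra].
  assert (0 <= A) by (eapply Rle_trans; [apply Rabs_pos| apply (HA 0); lra]).
  assert (0 <= EE) by (unfold EE; left; apply exp_pos).
  apply Rmult_le_compat_r. nra. lra.
Qed.
Lemma I2_bnd g A : gcont g -> (forall y, 0 <= y <= L -> Rabs (g y) <= A) ->
  forall x, 0 <= x <= L -> Rabs (I2 g x) <= L * (EE * A).
Proof.
  intros Hg HA x Hx. unfold I2. eapply Rle_trans. apply (abs_RInt_le_const _ x L (EE * A)). lra. apply ex2; auto.
  intros t Ht. rewrite Rabs_mult. rewrite cl_in by lra. pose proof (s2_bnd t ltac:(lra)).
  rewrite (Rabs_pos_eq (s2 t)) by lra. apply Rmult_le_compat; [lra | apply Rabs_pos | lra | apply HA; lra].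
  assert (0 <= A) by (eapply Rle_trans; [apply Rabs_pos| apply (HA 0); lra]).
  assert (0 <= EE) by (unfold EE; left; apply exp_pos).
  apply Rmult_le_compat_r. nra. lra.
Qed.

Definition CG := 2 * L * EE * EE * (m + 1) / DD.

Lemma Gop_bnd g A : gcont g -> (forall y, 0 <= y <= L -> Rabs (g y) <= A) ->
  forall x, 0 <= x <= L -> Rabs (Gop g x) <= CG * A.
Proof.
  intros Hg HA x Hx. pose proof (I1_bnd g A Hg HA x Hx). pose proof (I2_bnd g A Hg HA x Hx).
  pose proof (s1_bnd x Hx). pose proof (s2_bnd x Hx). pose proof DD_pos.
  assert (0 <= A) by (eapply Rle_trans; [apply Rabs_pos| apply (HA 0); lra]).
  assert (0 <= EE) by (unfold EE; left; apply exp_pos).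
  unfold Gop, CG. rewrite Rabs_mult, (Rabs_pos_eq (/ DD)) by (left; apply Rinv_0_lt_compat; lra).
  apply Rle_trans with ((EE * (L * (EE * A)) + EE * (L * (EE * A))) * / DD).
  apply Rmult_le_compat_r. left; apply Rinv_0_lt_compat; lra.
  eapply Rle_trans. apply Rabs_triang. rewrite !Rabs_mult, (Rabs_pos_eq (s1 x)), (Rabs_pos_eq (s2 x)) by lra.
  apply Rplus_le_compat; apply Rmult_le_compat; try apply Rabs_pos; try lra; eassumption.
  apply Rle_trans with ((2*L*EE*EE*A)*(m+1) * /DD). apply Rmult_le_compat_r. left; apply Rinv_0_lt_compat; lra.
  assert (0 <= L*EE*EE*A) by (repeat apply Rmult_le_pos; lra). nra. right; unfold Rdiv; ring.
Qed.

Lemma G1_bnd g A : gcont g -> (forall y, 0 <= y <= L -> Rabs (g y) <= A) ->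
  forall x, 0 <= x <= L -> Rabs (G1 g x) <= CG * A.
Proof.
  intros Hg HA x Hx. pose proof (I1_bnd g A Hg HA x Hx). pose proof (I2_bnd g A Hg HA x Hx).
  pose proof (d1_bnd x Hx). pose proof (d2_bnd x Hx). pose proof DD_pos.
  assert (0 <= A) by (eapply Rle_trans; [apply Rabs_pos| apply (HA 0); lra]).
  assert (0 <= EE) by (unfold EE; left; apply exp_pos).
  unfold G1, CG. rewrite Rabs_mult, (Rabs_pos_eq (/ DD)) by (left; apply Rinv_0_lt_compat; lra).
  apply Rle_trans with ((m * EE * (L * (EE * A)) + m * EE * (L * (EE * A))) * / DD).
  apply Rmult_le_compat_r. left; apply Rinv_0_lt_compat; lra.
  eapply Rle_trans. apply Rabs_triang. rewrite !Rabs_mult.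
  apply Rplus_le_compat; apply Rmult_le_compat; try apply Rabs_pos; eassumption.
  apply Rle_trans with ((2*L*EE*EE*A)*(m+1) * /DD). apply Rmult_le_compat_r. left; apply Rinv_0_lt_compat; lra.
  assert (0 <= L*EE*EE*A) by (repeat apply Rmult_le_pos; lra). nra. right; unfold Rdiv; ring.
Qed.
Ltac rring := match goal with |- ?a = ?b => change (a = b :> R); ring end.

Lemma Gop_cpt g : gcont g -> forall x, continuity_pt (Gop g) x.
Proof. intros. apply (der_cpt _ _ _ (Gop_der g H x)). Qed.

Lemma Gop_ge z z1 z2 g : gcont g -> (forall x, 0 <= x <= L -> continuity_pt z x) ->
  (forall x, 0 < x < L -> is_derive z x (z1 x) /\ is_derive z1 x (z2 x)) ->
  (forall x, 0 < x < L -> - z2 x + m * m * z x <= g x) -> z 0 <= 0 -> z L <= 0 ->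
  forall x, 0 <= x <= L -> z x <= Gop g x.
Proof.
  intros Hg Hc Hd Hineq H0 HL0 x Hx.
  cut (z x - Gop g x <= 0). lra.
  apply (maxp (m * m) L (fun x => z x - Gop g x) (fun x => z1 x - G1 g x)
     (fun x => z2 x - (m * m * Gop g x - g (cl x)))); auto.
  - nra.
  - intros y Hy. apply continuity_pt_minus. auto. apply Gop_cpt; auto.
  - intros y Hy. destruct (Hd y Hy). split; apply der_minus; auto. apply Gop_der; auto. apply G1_der; auto.
  - intros y Hy. rewrite cl_in by lra. pose proof (Hineq y Hy). lra.
  - rewrite Gop_0. lra.
  - rewrite Gop_L. lra.
Qed.

Lemma Gop_le z z1 z2 g : gcont g -> (forall x, 0 <= x <= L -> continuity_pt z x) ->
  (forall x, 0 < x < L -> is_derive z x (z1 x) /\ is_derive z1 x (z2 x)) ->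
  (forall x, 0 < x < L -> g x <= - z2 x + m * m * z x) -> 0 <= z 0 -> 0 <= z L ->
  forall x, 0 <= x <= L -> Gop g x <= z x.
Proof.
  intros Hg Hc Hd Hineq H0 HL0 x Hx.
  cut (Gop g x - z x <= 0). lra.
  apply (maxp (m * m) L (fun x => Gop g x - z x) (fun x => G1 g x - z1 x)
     (fun x => (m * m * Gop g x - g (cl x)) - z2 x)); auto.
  - nra.
  - intros y Hy. apply continuity_pt_minus. apply Gop_cpt; auto. auto.
  - intros y Hy. destruct (Hd y Hy). split; apply der_minus; auto. apply Gop_der; auto. apply G1_der; auto.
  - intros y Hy. rewrite cl_in by lra. pose proof (Hineq y Hy). lra.
  - rewrite Gop_0. lra.
  - rewrite Gop_L. lra.
Qed.

Lemma Gop_der2 g : gcont g -> forall x, is_derive (Gop g) x (G1 g x) /\ is_derive (G1 g) x (m * m * Gop g x - g (cl x)).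
Proof. intros; split; [apply Gop_der|apply G1_der]; auto. Qed.

Lemma Gop_mono g1 g2 : gcont g1 -> gcont g2 -> (forall y, 0 <= y <= L -> g1 y <= g2 y) ->
  forall x, 0 <= x <= L -> Gop g1 x <= Gop g2 x.
Proof.
  intros H1 H2 Hle. apply (Gop_ge (Gop g1) (G1 g1) (fun x => m * m * Gop g1 x - g1 (cl x))); auto.
  - intros; apply Gop_cpt; auto.
  - intros; apply Gop_der2; auto.
  - intros y Hy. rewrite cl_in by lra. pose proof (Hle y ltac:(lra)). lra.
  - rewrite Gop_0; lra.
  - rewrite Gop_L; lra.
Qed.

Lemma Gop_nonneg g : gcont g -> (forall y, 0 <= y <= L -> 0 <= g y) -> forall x, 0 <= x <= L -> 0 <= Gop g x.
Proof.
  intros Hg Hp. apply (Gop_ge (fun _ => 0) (fun _ => 0) (fun _ => 0)); auto.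
  - intros; apply continuity_pt_const. intros a c; auto.
  - intros; split; apply der_const.
  - intros y Hy. pose proof (Hp y ltac:(lra)). lra.
  - lra.
  - lra.
Qed.

Definition SL := Sh (m * L).
Lemma SL_pos : 0 < SL. Proof. unfold SL. apply Sh_pos. nra. Qed.
Definition Bf x := (s1 x + s2 x) / SL.
Definition B1 x := (d1 x + d2 x) / SL.
Lemma Bf_der x : is_derive Bf x (B1 x) /\ is_derive B1 x (m * m * Bf x).
Proof.
  unfold Bf, B1, Rdiv. split.
  - apply is_derive_eq with ((d1 x + d2 x) * / SL).
    apply (is_derive_ext (fun y => / SL * (s1 y + s2 y))). intros; apply Rmult_comm.
    eapply is_derive_eq. apply der_scal. apply der_plus. apply s1_der. apply s2_der. rring. rring.
  - apply is_derive_eq with (m * m * ((s1 x + s2 x) * / SL)).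
    apply (is_derive_ext (fun y => / SL * (d1 y + d2 y))). intros; apply Rmult_comm.
    eapply is_derive_eq. apply der_scal. apply der_plus. apply d1_der. apply d2_der. rring. rring.
Qed.
Lemma Bf_0 : Bf 0 = 1.
Proof. unfold Bf, s1, s2, SL. replace (m * 0) with 0 by ring. rewrite Sh_0. replace (L - 0) with L by ring. field. pose proof SL_pos. unfold SL in H. lra. Qed.
Lemma Bf_L : Bf L = 1.
Proof. unfold Bf, s1, s2, SL. replace (m * (L - L)) with 0 by ring. rewrite Sh_0. field. pose proof SL_pos. unfold SL in H. lra. Qed.
Definition beta := Sh (m * L / 2) / SL.
Lemma beta_pos : 0 < beta. Proof. unfold beta. apply Rdiv_lt_0_compat. apply Sh_pos. nra. apply SL_pos. Qed.
Lemma Bf_ge x : 0 <= x <= L -> beta <= Bf x.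
Proof.
  intros Hx. unfold Bf, beta. pose proof SL_pos. unfold Rdiv. apply Rmult_le_compat_r. left; apply Rinv_0_lt_compat; lra.
  pose proof (s1_bnd x Hx). pose proof (s2_bnd x Hx). unfold s1, s2 in *.
  destruct (Rle_dec (L/2) x).
  - pose proof (Sh_incr (m * L / 2) (m * x) ltac:(nra)). lra.
  - pose proof (Sh_incr (m * L / 2) (m * (L - x)) ltac:(nra)). lra.
Qed.
Lemma Bf_cpt x : continuity_pt Bf x.
Proof. apply (der_cpt _ _ _ (proj1 (Bf_der x))). Qed.

Lemma gcont_const c : gcont (fun _ => c).
Proof. intros y. apply continuous_const. Qed.

Lemma Gop_M x : 0 <= x <= L -> Gop (fun _ => m * m) x + Bf x = 1.
Proof.
  intros Hx. cut (Gop (fun _ => m * m) x <= 1 - Bf x /\ 1 - Bf x <= Gop (fun _ => m * m) x). lra.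
  split.
  - apply (Gop_le (fun x => 1 - Bf x) (fun x => - B1 x) (fun x => - (m * m * Bf x))); auto.
    + apply gcont_const.
    + intros; apply continuity_pt_minus. apply continuity_pt_const; intros a c; auto. apply Bf_cpt.
    + intros y Hy. destruct (Bf_der y). split.
      eapply is_derive_eq. apply (der_minus (fun _ => 1) Bf). apply der_const. exact H. rring.
      apply (is_derive_ext (fun y => (-1) * B1 y)). intros t; rring.
      eapply is_derive_eq. apply (der_scal B1 (-1)). exact H0. rring.
    + intros; lra.
    + rewrite Bf_0; lra.
    + rewrite Bf_L; lra.
  - apply (Gop_ge (fun x => 1 - Bf x) (fun x => - B1 x) (fun x => - (m * m * Bf x))); auto.
    + apply gcont_const.
    + intros; apply continuity_pt_minus. apply continuity_pt_const; intros a c; auto. apply Bf_cpt.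
    + intros y Hy. destruct (Bf_der y). split.
      eapply is_derive_eq. apply (der_minus (fun _ => 1) Bf). apply der_const. exact H. rring.
      apply (is_derive_ext (fun y => (-1) * B1 y)). intros t; rring.
      eapply is_derive_eq. apply (der_scal B1 (-1)). exact H0. rring.
    + intros; lra.
    + rewrite Bf_0; lra.
    + rewrite Bf_L; lra.
Qed.

Lemma Gop_minus g1 g2 : gcont g1 -> gcont g2 -> forall x,
  Gop g1 x - Gop g2 x = Gop (fun y => g1 y - g2 y) x.
Proof.
  intros H1 H2 x. unfold Gop, I1, I2.
  assert (E1 : RInt (fun y => s1 y * (g1 (cl y) - g2 (cl y))) 0 x =
     RInt (fun y => s1 y * g1 (cl y)) 0 x - RInt (fun y => s1 y * g2 (cl y)) 0 x).
  { rewrite <- (RInt_minus (V:=R_CompleteNormedModule)) by (apply ex1; auto).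
    apply RInt_ext. intros; unfold minus, plus, opp; simpl. ring. }
  assert (E2 : RInt (fun y => s2 y * (g1 (cl y) - g2 (cl y))) x L =
     RInt (fun y => s2 y * g1 (cl y)) x L - RInt (fun y => s2 y * g2 (cl y)) x L).
  { rewrite <- (RInt_minus (V:=R_CompleteNormedModule)) by (apply ex2; auto).
    apply RInt_ext. intros; unfold minus, plus, opp; simpl. ring. }
  rewrite E1, E2. ring.
Qed.

End Green.


Open Scope R_scope.

Lemma lip_of_der f df K L : (forall t, 0 <= t <= L -> is_derive f t (df t)) ->
  (forall t, 0 <= t <= L -> Rabs (df t) <= K) ->
  forall x y, 0 <= x <= L -> 0 <= y <= L -> Rabs (f x - f y) <= K * Rabs (x - y).
Proof.
  intros Hd Hb. assert (Hw : forall x y, 0 <= x <= L -> 0 <= y <= L -> x < y -> Rabs (f x - f y) <= K * Rabs (x - y)).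
  { intros x y Hx Hy Hxy. destruct (mvt f df x y Hxy) as [c [Hc E]]. intros; apply Hd; lra.
    rewrite <- Rabs_Ropp. replace (- (f x - f y)) with (f y - f x) by ring. rewrite E.
    rewrite Rabs_mult. rewrite (Rabs_minus_sym x y). apply Rmult_le_compat_r. apply Rabs_pos. apply Hb; lra. }
  intros x y Hx Hy. destruct (Rtotal_order x y) as [H|[H|H]].
  - auto.
  - rewrite H, !Rminus_diag, Rabs_R0. pose proof (Hb y Hy). pose proof (Rabs_pos (df y)). lra.
  - rewrite Rabs_minus_sym, (Rabs_minus_sym x y). auto.
Qed.

Lemma unif_conv (u : nat -> R -> R) (l : R -> R) K L : 0 < L -> 0 <= K ->
  (forall x, 0 <= x <= L -> is_lim_seq (fun n => u n x) (l x)) ->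
  (forall n x y, 0 <= x <= L -> 0 <= y <= L -> Rabs (u n x - u n y) <= K * Rabs (x - y)) ->
  (forall x y, 0 <= x <= L -> 0 <= y <= L -> Rabs (l x - l y) <= K * Rabs (x - y)) ->
  forall eps, 0 < eps -> exists N, forall n, (N <= n)%nat -> forall x, 0 <= x <= L -> Rabs (u n x - l x) <= eps.
Proof.
  intros HL HK Hlim Hu Hl eps Heps.
  assert (Hpt : forall x, 0 <= x <= L -> exists N, forall n, (N <= n)%nat -> Rabs (u n x - l x) < eps / 2).
  { intros x Hx. pose proof (Hlim x Hx) as H. apply is_lim_seq_spec in H.
    destruct (H (mkposreal (eps/2) ltac:(lra))) as [N HN]. exists N. intros n Hn. apply HN; auto. }
  destruct (nfloor_ex (4 * K * L / eps)) as [J0 HJ0].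
  { apply Rmult_le_pos. nra. left; apply Rinv_0_lt_compat; lra. }
  set (J := S J0).
  assert (HJ : 4 * K * L / eps < INR J). { unfold J. rewrite S_INR. lra. }
  assert (HJpos : 0 < INR J). { unfold J. rewrite S_INR. pose proof (pos_INR J0). lra. }
  set (g := fun j : nat => L * INR j / INR J).
  assert (Hg : forall j, (j <= J)%nat -> 0 <= g j <= L).
  { intros j Hj. unfold g. apply le_INR in Hj. pose proof (pos_INR j). split.
    apply Rmult_le_pos. nra. left; apply Rinv_0_lt_compat; lra.
    apply Rmult_le_reg_r with (INR J); auto. unfold Rdiv. rewrite Rmult_assoc, Rinv_l by lra. nra. }
  assert (Hgrid : forall J', (J' <= J)%nat -> exists N, forall j, (j <= J')%nat -> forall n, (N <= n)%nat ->
      Rabs (u n (g j) - l (g j)) < eps / 2).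
  { induction J' as [|J' IH]; intros HJ'.
    - destruct (Hpt (g 0%nat) (Hg 0%nat ltac:(lia))) as [N HN]. exists N. intros j Hj n Hn.
      replace j with 0%nat by lia. auto.
    - destruct (IH ltac:(lia)) as [N1 HN1]. destruct (Hpt (g (S J')) (Hg (S J') HJ')) as [N2 HN2].
      exists (Nat.max N1 N2). intros j Hj n Hn. destruct (Nat.eq_dec j (S J')).
      + subst. apply HN2. lia.
      + apply HN1. lia. lia. }
  destruct (Hgrid J (Nat.le_refl J)) as [N HN]. exists N. intros n Hn x Hx.
  destruct (nfloor_ex (x * INR J / L)) as [j Hj].
  { apply Rmult_le_pos. nra. left; apply Rinv_0_lt_compat; lra. }
  assert (HjJ : (j <= J)%nat).
  { apply INR_le. destruct Hj as [Hj _]. eapply Rle_trans. apply Hj.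
    apply Rmult_le_reg_r with L; auto. unfold Rdiv. rewrite Rmult_assoc, Rinv_l by lra. nra. }
  assert (Hdist : Rabs (x - g j) <= L / INR J).
  { unfold g. destruct Hj as [Hj1 Hj2].
    assert (E : x - L * INR j / INR J = L / INR J * (x * INR J / L - INR j)) by (field; lra).
    rewrite E, Rabs_mult, Rabs_pos_eq. 2: { apply Rmult_le_pos; [lra| left; apply Rinv_0_lt_compat; lra]. }
    rewrite Rabs_pos_eq by lra. assert (0 < L / INR J) by (apply Rdiv_lt_0_compat; lra). nra. }
  pose proof (HN j HjJ n Hn). pose proof (Hu n x (g j) Hx (Hg j HjJ)). pose proof (Hl (g j) x (Hg j HjJ) Hx).
  rewrite (Rabs_minus_sym (g j) x) in H1.
  assert (HKL : K * (L / INR J) <= eps / 4).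
  { apply Rmult_lt_compat_r with (r := eps / INR J) in HJ. 2: apply Rdiv_lt_0_compat; lra.
    replace (INR J * (eps / INR J)) with eps in HJ by (field; lra).
    replace (4 * K * L / eps * (eps / INR J)) with (4 * (K * (L / INR J))) in HJ by (field; lra). lra. }
  assert (K * Rabs (x - g j) <= eps / 4) by (eapply Rle_trans; [apply Rmult_le_compat_l; eauto|]; lra).
  replace (u n x - l x) with ((u n x - u n (g j)) + (u n (g j) - l (g j)) + (l (g j) - l x)) by ring.
  eapply Rle_trans. apply Rabs_triang. eapply Rle_trans. apply Rplus_le_compat_r. apply Rabs_triang. lra.
Qed.

Lemma eps_zero a C : 0 <= C -> (forall eps, 0 < eps -> Rabs a <= C * eps) -> a = 0.
Proof.
  intros HC H. destruct (Req_dec a 0); auto. exfalso.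
  assert (0 < Rabs a) by (apply Rabs_pos_lt; auto).
  pose proof (H (Rabs a / (2 * (C + 1))) ltac:(apply Rdiv_lt_0_compat; lra)).
  assert (C * (Rabs a / (2 * (C + 1))) < Rabs a).
  { unfold Rdiv. rewrite <- Rmult_assoc. apply Rmult_lt_reg_r with (2 * (C+1)). lra.
    rewrite Rmult_assoc, Rinv_l by lra. nra. }
  lra.
Qed.


Open Scope R_scope.
Section Alg.
Variables b abar : R.
Hypothesis Hb : 1 < b.
Hypothesis Ha0 : 0 < abar.
Hypothesis Ha1 : abar < 1.
Definition MM := b + 2.
Definition H1v p q := p * (1 - p - abar * q) + MM * p.
Definition H2v p q := q * (1 - b * p - q) + MM * q.
Definition A0 := 2 * MM + 3.
Lemma H1v_bnd p q : 0 <= p <= 1 -> 0 <= q <= 1 -> 0 <= H1v p q <= MM.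
Proof. intros. unfold H1v, MM.
  replace (p * (1 - p - abar * q) + (b + 2) * p) with (p * (1 + (b+2) - p - abar * q)) by ring.
  assert (0 <= abar * q <= 1) by (split; nra).
  split. apply Rmult_le_pos; lra.
  assert (p * (1 - p) <= (b+2) * (1 - p)) by (apply Rmult_le_compat_r; lra).
  assert (0 <= p * (abar * q)) by (apply Rmult_le_pos; lra). nra. Qed.
Lemma H2v_bnd p q : 0 <= p <= 1 -> 0 <= q <= 1 -> 0 <= H2v p q <= MM.
Proof. intros. unfold H2v, MM.
  replace (q * (1 - b * p - q) + (b + 2) * q) with (q * (1 + (b+2) - q - b * p)) by ring.
  assert (0 <= b * p <= b) by (split; nra).
  split. apply Rmult_le_pos; lra.
  assert (q * (1 - q) <= (b+2) * (1 - q)) by (apply Rmult_le_compat_r; lra).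
  assert (0 <= q * (b * p)) by (apply Rmult_le_pos; lra). nra. Qed.
Lemma H_abs h : 0 <= h <= MM -> Rabs h <= A0.
Proof. intros. unfold A0. rewrite Rabs_pos_eq; lra. Qed.
Lemma H1v_low s p q kk : 0 <= kk -> 0 <= s <= 1 - abar - kk -> s <= p <= 1 -> 0 <= q <= 1 -> (kk + MM) * s <= H1v p q.
Proof. intros. unfold H1v, MM.
  assert (0 <= p*abar*(1-q)) by (repeat apply Rmult_le_pos; lra).
  assert (0 <= (p-s)*(1+(b+2)-abar-p-s)) by (apply Rmult_le_pos; lra).
  assert (0 <= s*(1-abar-kk-s)) by (apply Rmult_le_pos; lra).
  nra. Qed.
Lemma H1v_mono p q p' q' : 0 <= p' <= p -> p <= 1 -> 0 <= q <= q' -> q' <= 1 -> H1v p' q' <= H1v p q.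
Proof. intros. unfold H1v, MM.
  assert (0 <= p'*abar*(q'-q)) by (repeat apply Rmult_le_pos; lra).
  assert (0 <= (p-p')*(1+(b+2)-abar*q-p-p')) by (apply Rmult_le_pos; nra).
  nra. Qed.
Lemma H2v_mono p q p' q' : 0 <= p' <= p -> p <= 1 -> 0 <= q <= q' -> q' <= 1 -> H2v p q <= H2v p' q'.
Proof. intros. unfold H2v, MM.
  assert (0 <= q'*b*(p-p')) by (repeat apply Rmult_le_pos; lra).
  assert (0 <= (q'-q)*(1+(b+2)-b*p-q-q')) by (apply Rmult_le_pos; nra).
  nra. Qed.
Lemma H1v_lip p q p' q' : 0 <= p <= 1 -> 0 <= q <= 1 -> 0 <= p' <= 1 -> 0 <= q' <= 1 ->
  Rabs (H1v p q - H1v p' q') <= A0 * (Rabs (p - p') + Rabs (q - q')).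
Proof.
  intros. unfold H1v, A0, MM.
  replace (p * (1 - p - abar * q) + (b + 2) * p - (p' * (1 - p' - abar * q') + (b + 2) * p'))
    with ((p - p') * (1 + (b+2) - p - p' - abar * q) + (- abar * p') * (q - q')) by ring.
  eapply Rle_trans. apply Rabs_triang. rewrite (Rabs_mult (p - p')), (Rabs_mult (- abar * p')).
  assert (Rabs (1 + (b + 2) - p - p' - abar * q) <= 2 * (b + 2) + 3) by (apply Rabs_le; nra).
  assert (Rabs (- abar * p') <= 2 * (b + 2) + 3) by (apply Rabs_le; nra).
  pose proof (Rabs_pos (p - p')). pose proof (Rabs_pos (q - q')).
  apply Rle_trans with (Rabs (p-p') * (2*(b+2)+3) + (2*(b+2)+3) * Rabs (q-q')).
  apply Rplus_le_compat; [apply Rmult_le_compat_l | apply Rmult_le_compat_r]; auto. lra.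
Qed.
Lemma H2v_lip p q p' q' : 0 <= p <= 1 -> 0 <= q <= 1 -> 0 <= p' <= 1 -> 0 <= q' <= 1 ->
  Rabs (H2v p q - H2v p' q') <= A0 * (Rabs (p - p') + Rabs (q - q')).
Proof.
  intros. unfold H2v, A0, MM.
  replace (q * (1 - b * p - q) + (b + 2) * q - (q' * (1 - b * p' - q') + (b + 2) * q'))
    with ((q - q') * (1 + (b+2) - q - q' - b * p) + (- b * q') * (p - p')) by ring.
  eapply Rle_trans. apply Rabs_triang. rewrite (Rabs_mult (q - q')), (Rabs_mult (- b * q')).
  assert (Rabs (1 + (b + 2) - q - q' - b * p) <= 2 * (b + 2) + 3) by (apply Rabs_le; nra).
  assert (Rabs (- b * q') <= 2 * (b + 2) + 3) by (apply Rabs_le; nra).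
  pose proof (Rabs_pos (p - p')). pose proof (Rabs_pos (q - q')).
  apply Rle_trans with (Rabs (q-q') * (2*(b+2)+3) + (2*(b+2)+3) * Rabs (p-p')).
  apply Rplus_le_compat; [apply Rmult_le_compat_l | apply Rmult_le_compat_r]; auto. lra.
Qed.
Lemma H2v_final p q : 0 <= p <= 1 -> 0 <= q <= 1 -> b * p * q <= MM - H2v p q.
Proof. intros. unfold H2v, MM.
  assert (0 <= (1-q)*(b+2-q)) by (apply Rmult_le_pos; lra). nra. Qed.
End Alg.


Open Scope R_scope.

Lemma cM (f g : R -> R) x : continuous f x -> continuous g x -> continuous (fun y => f y * g y) x.
Proof. intros. apply (continuous_mult f g x); auto. Qed.
Lemma cP (f g : R -> R) x : continuous f x -> continuous g x -> continuous (fun y => f y + g y) x.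
Proof. intros. apply (continuous_plus f g x); auto. Qed.
Lemma cMi (f g : R -> R) x : continuous f x -> continuous g x -> continuous (fun y => f y - g y) x.
Proof. intros. apply (continuous_plus f (fun y => - g y) x); auto. apply (continuous_opp g x); auto. Qed.
Lemma cC (c : R) x : continuous (fun _ : R => c) x.
Proof. apply continuous_const. Qed.

Ltac cont_tac := repeat match goal with
 | |- continuous (fun _ => ?c) ?x => apply (cC c x)
 | |- continuous (fun y => _ - _) _ => apply cMi
 | |- continuous (fun y => _ + _) _ => apply cP
 | |- continuous (fun y => _ * _) _ => apply cM
 end.

Section Main.
Variables b L abar : R.
Hypothesis Hb : 1 < b.
Hypothesis HL : PI < L.
Hypothesis Ha0 : 0 < abar.
Hypothesis Hab : abar < 1 - PI ^ 2 / L ^ 2.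

Lemma L_pos : 0 < L. Proof. pose proof PI_RGT_0. lra. Qed.
Definition kk := PI / L.
Lemma kk2 : kk * kk = PI ^ 2 / L ^ 2. Proof. unfold kk. pose proof L_pos. field. lra. Qed.
Lemma kk_pos : 0 < kk. Proof. unfold kk. apply Rdiv_lt_0_compat. apply PI_RGT_0. apply L_pos. Qed.
Lemma Ha1 : abar < 1.
Proof. pose proof kk2. pose proof kk_pos. assert (0 < kk * kk) by nra. lra. Qed.
#[local] Hint Resolve Ha1 : core.
Definition eps := 1 - abar - kk * kk.
Lemma eps_pos : 0 < eps. Proof. unfold eps. rewrite kk2. lra. Qed.
Lemma eps_le1 : eps <= 1. Proof. unfold eps. pose proof kk_pos. assert (0 < kk * kk) by nra. lra. Qed.

Definition m := sqrt (MM b).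
Lemma MM_pos : 0 < MM b. Proof. unfold MM. lra. Qed.
Lemma m_pos : 0 < m. Proof. unfold m. apply sqrt_lt_R0. apply MM_pos. Qed.
#[local] Hint Resolve m_pos L_pos : core.
Lemma mm_eq : m * m = MM b. Proof. unfold m. apply sqrt_sqrt. left; apply MM_pos. Qed.

Definition sf x := eps * sin (kk * x).
Lemma kkL : kk * L = PI. Proof. unfold kk. pose proof L_pos. field. lra. Qed.
Lemma sf_bnd x : 0 <= x <= L -> 0 <= sf x <= eps.
Proof.
  intros Hx. unfold sf. pose proof eps_pos. pose proof kk_pos.
  assert (0 <= sin (kk * x)). { apply sin_ge_0. nra. rewrite <- kkL. nra. }
  pose proof (SIN_bound (kk * x)). split. nra. nra.
Qed.
Lemma sf_pos x : 0 < x < L -> 0 < sf x.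
Proof.
  intros Hx. unfold sf. pose proof eps_pos. pose proof kk_pos.
  assert (0 < sin (kk * x)). { apply sin_gt_0. nra. rewrite <- kkL. nra. }
  nra.
Qed.
Lemma sf_0 : sf 0 = 0. Proof. unfold sf. rewrite Rmult_0_r, sin_0. ring. Qed.
Lemma sf_L : sf L = 0. Proof. unfold sf. rewrite kkL, sin_PI. ring. Qed.
Definition sf1 x := eps * kk * cos (kk * x).
Lemma sf_der x : is_derive sf x (sf1 x) /\ is_derive sf1 x (- (kk * kk) * sf x).
Proof. unfold sf, sf1. split; auto_derive; auto; ring. Qed.
Lemma sf_cpt x : continuity_pt sf x.
Proof. apply (der_cpt _ _ _ (proj1 (sf_der x))). Qed.

Definition H1 (p q : R -> R) y := H1v b abar (p y) (q y).
Definition H2 (p q : R -> R) y := H2v b (p y) (q y).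

Lemma gcont_H1 p q : gcont L p -> gcont L q -> gcont L (H1 p q).
Proof. intros Hp Hq y. unfold H1, H1v. cbv beta. cont_tac; [exact (Hp y)|exact (Hp y)|exact (Hq y)|exact (Hp y)]. Qed.
Lemma gcont_H2 p q : gcont L p -> gcont L q -> gcont L (H2 p q).
Proof. intros Hp Hq y. unfold H2, H2v. cbv beta. cont_tac. all: first [exact (Hp y) | exact (Hq y)]. Qed.

Lemma gcont_Gop g : gcont L g -> gcont L (Gop m L g).
Proof.
  intros Hg y. apply (continuous_comp (cl L) (Gop m L g)). apply cl_cont. apply L_pos.
  apply continuity_pt_filterlim. apply Gop_cpt; auto.
Qed.
Lemma gcont_GopB g : gcont L g -> gcont L (fun x => Gop m L g x + Bf m L x).
Proof.
  intros Hg y. apply (continuous_comp (cl L) (fun x => Gop m L g x + Bf m L x)). apply cl_cont. apply L_pos.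
  apply continuity_pt_filterlim. apply continuity_pt_plus. apply Gop_cpt; auto. apply Bf_cpt.
Qed.

Fixpoint it (n : nat) : (R -> R) * (R -> R) :=
  match n with
  | O => (fun _ => 1, fun _ => 0)
  | S n' => (Gop m L (H1 (fst (it n')) (snd (it n'))),
             fun x => Gop m L (H2 (fst (it n')) (snd (it n'))) x + Bf m L x)
  end.
Definition P n := fst (it n).
Definition Q n := snd (it n).
Lemma P_S n : P (S n) = Gop m L (H1 (P n) (Q n)). Proof. reflexivity. Qed.
Lemma Q_S n : Q (S n) = fun x => Gop m L (H2 (P n) (Q n)) x + Bf m L x. Proof. reflexivity. Qed.


Definition KK := CG m L * A0 b + 2 * m * EE m L / SL m L.
Lemma EE_pos : 0 < EE m L. Proof. unfold EE. apply exp_pos. Qed.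
Lemma CG_pos : 0 <= CG m L.
Proof. unfold CG. pose proof (DD_pos m L m_pos L_pos). pose proof EE_pos. pose proof m_pos. pose proof L_pos.
  apply Rmult_le_pos. repeat apply Rmult_le_pos; lra. left; apply Rinv_0_lt_compat; lra. Qed.
Lemma A0_pos : 0 <= A0 b. Proof. unfold A0, MM. lra. Qed.
Lemma KK_ge : CG m L * A0 b <= KK /\ 0 <= 2 * m * EE m L / SL m L.
Proof. unfold KK. pose proof (SL_pos m L m_pos L_pos). pose proof EE_pos. pose proof m_pos.
  assert (0 <= 2 * m * EE m L / SL m L). { apply Rmult_le_pos. repeat apply Rmult_le_pos; lra. left; apply Rinv_0_lt_compat; lra. }
  lra. Qed.
Lemma KK_pos : 0 <= KK. Proof. pose proof KK_ge. pose proof CG_pos. pose proof A0_pos. assert (0 <= CG m L * A0 b) by (apply Rmult_le_pos; auto). lra. Qed.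

Lemma B1_bnd x : 0 <= x <= L -> Rabs (B1 m L x) <= 2 * m * EE m L / SL m L.
Proof.
  intros Hx. unfold B1. pose proof (SL_pos m L m_pos L_pos).
  pose proof (d1_bnd m L m_pos x Hx). pose proof (d2_bnd m L m_pos x Hx).
  unfold Rdiv. rewrite Rabs_mult, (Rabs_pos_eq (/ SL m L)) by (left; apply Rinv_0_lt_compat; lra).
  apply Rmult_le_compat_r. left; apply Rinv_0_lt_compat; lra.
  eapply Rle_trans. apply Rabs_triang. lra.
Qed.

Lemma H1_bnd p q y : 0 <= p y <= 1 -> 0 <= q y <= 1 -> Rabs (H1 p q y) <= A0 b.
Proof. intros. unfold H1. apply (H_abs b abar); auto. apply (H1v_bnd b abar); auto. Qed.
Lemma H2_bnd p q y : 0 <= p y <= 1 -> 0 <= q y <= 1 -> Rabs (H2 p q y) <= A0 b.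
Proof. intros. unfold H2. apply (H_abs b abar); auto. apply (H2v_bnd b abar); auto. Qed.

Definition Lip (f : R -> R) := forall x y, 0 <= x <= L -> 0 <= y <= L -> Rabs (f x - f y) <= KK * Rabs (x - y).

Definition Inv n := gcont L (P n) /\ gcont L (Q n) /\
  (forall x, 0 <= x <= L -> (sf x <= P n x <= 1) /\ (0 <= Q n x <= 1)) /\ Lip (P n) /\ Lip (Q n).

Lemma Gop_Mx x : 0 <= x <= L -> Gop m L (fun _ => m * m) x = 1 - Bf m L x.
Proof. intros. pose proof (Gop_M m L m_pos L_pos x H). lra. Qed.
Lemma Bf_pos x : 0 <= x <= L -> 0 < Bf m L x.
Proof. intros. pose proof (Bf_ge m L m_pos L_pos x H). pose proof (beta_pos m L m_pos L_pos). lra. Qed.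

Lemma Inv_S n : Inv n -> Inv (S n).
Proof.
  intros [HgP [HgQ [Hbox [HlP HlQ]]]].
  assert (Hg1 : gcont L (H1 (P n) (Q n))) by (apply gcont_H1; auto).
  assert (Hg2 : gcont L (H2 (P n) (Q n))) by (apply gcont_H2; auto).
  assert (Hsf : forall y, 0 <= y <= L -> 0 <= sf y <= eps) by apply sf_bnd.
  pose proof eps_le1.
  assert (Hbox' : forall y, 0 <= y <= L -> 0 <= P n y <= 1 /\ 0 <= Q n y <= 1).
  { intros y Hy. destruct (Hbox y Hy). pose proof (Hsf y Hy). split; lra. }
  pose proof m_pos as Hm. pose proof L_pos as HL0. pose proof mm_eq as Hmm.
  unfold Inv. rewrite P_S, Q_S. split; [|split; [|split; [|split]]].
  - apply gcont_Gop; auto.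
  - apply gcont_GopB; auto.
  - intros x Hx. split; split.
    + apply (Gop_ge m L Hm HL0 sf sf1 (fun x => - (kk * kk) * sf x)); auto.
      * intros; apply sf_cpt.
      * intros; apply sf_der.
      * intros y Hy. rewrite Hmm. destruct (Hbox y ltac:(lra)). pose proof (Hsf y ltac:(lra)).
        unfold H1. pose proof kk_pos.
        assert ((kk * kk + MM b) * sf y <= H1v b abar (P n y) (Q n y)).
        { apply (H1v_low b abar); auto; try nra; unfold eps in *; lra. }
        lra.
      * rewrite sf_0; lra.
      * rewrite sf_L; lra.
    + eapply Rle_trans. apply (Gop_mono m L Hm HL0 _ (fun _ => m * m)); auto. apply gcont_const.
      intros y Hy. rewrite Hmm. destruct (Hbox' y Hy). apply (H1v_bnd b abar); auto.
      rewrite Gop_Mx by auto. pose proof (Bf_pos x Hx). lra.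
    + pose proof (Gop_nonneg m L Hm HL0 (H2 (P n) (Q n)) Hg2).
      assert (0 <= Gop m L (H2 (P n) (Q n)) x). { apply H0; auto. intros y Hy. destruct (Hbox' y Hy). apply (H2v_bnd b abar); auto. }
      pose proof (Bf_pos x Hx). lra.
    + assert (Gop m L (H2 (P n) (Q n)) x <= Gop m L (fun _ => m * m) x).
      { apply (Gop_mono m L Hm HL0); auto. apply gcont_const.
        intros y Hy. rewrite Hmm. destruct (Hbox' y Hy). apply (H2v_bnd b abar); auto. }
      rewrite Gop_Mx in H0 by auto. lra.
  - intros x y Hx Hy. apply (lip_of_der _ (G1 m L (H1 (P n) (Q n))) KK L); auto.
    + intros; apply Gop_der; auto.
    + intros t Ht. eapply Rle_trans. apply (G1_bnd m L Hm HL0 _ (A0 b)); auto.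
      intros z Hz. destruct (Hbox' z Hz). apply H1_bnd; auto. apply KK_ge.
  - intros x y Hx Hy. apply (lip_of_der (fun t => Gop m L (H2 (P n) (Q n)) t + Bf m L t) (fun t => G1 m L (H2 (P n) (Q n)) t + B1 m L t) KK L); auto.
    + intros; apply der_plus. apply Gop_der; auto. apply Bf_der.
    + intros t Ht. eapply Rle_trans. apply Rabs_triang.
      pose proof (G1_bnd m L Hm HL0 (H2 (P n) (Q n)) (A0 b) Hg2) as HG.
      assert (Rabs (G1 m L (H2 (P n) (Q n)) t) <= CG m L * A0 b).
      { apply HG; auto. intros z Hz. destruct (Hbox' z Hz). apply H2_bnd; auto. }
      pose proof (B1_bnd t Ht). unfold KK. lra.
Qed.

Lemma Inv_0 : Inv 0.
Proof.
  unfold Inv, P, Q; simpl. split; [|split; [|split; [|split]]].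
  - apply gcont_const.
  - apply gcont_const.
  - intros x Hx. pose proof (sf_bnd x Hx). pose proof eps_le1. lra.
  - intros x y _ _. rewrite Rminus_diag, Rabs_R0. pose proof KK_pos. pose proof (Rabs_pos (x - y)). nra.
  - intros x y _ _. rewrite Rminus_diag, Rabs_R0. pose proof KK_pos. pose proof (Rabs_pos (x - y)). nra.
Qed.

Lemma Inv_all n : Inv n.
Proof. induction n. apply Inv_0. apply Inv_S; auto. Qed.

Lemma box n x : 0 <= x <= L -> 0 <= P n x <= 1 /\ 0 <= Q n x <= 1.
Proof. intros Hx. destruct (Inv_all n) as [_ [_ [Hb' _]]]. destruct (Hb' x Hx). pose proof (sf_bnd x Hx). split; lra. Qed.

Lemma mono n : forall x, 0 <= x <= L -> P (S n) x <= P n x /\ Q n x <= Q (S n) x.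
Proof.
  pose proof m_pos as Hm. pose proof L_pos as HL0.
  induction n; intros x Hx.
  - destruct (box 1 x Hx). change (P 0 x) with 1. change (Q 0 x) with 0. split; lra.
  - destruct (Inv_all n) as [HgP [HgQ _]]. destruct (Inv_all (S n)) as [HgP' [HgQ' _]].
    split.
    + change (Gop m L (H1 (P (S n)) (Q (S n))) x <= Gop m L (H1 (P n) (Q n)) x). apply (Gop_mono m L Hm HL0); [apply gcont_H1; auto | apply gcont_H1; auto | | auto].
      intros y Hy. destruct (IHn y Hy). destruct (box n y Hy). destruct (box (S n) y Hy).
      unfold H1. apply (H1v_mono b abar); auto; lra.
    + change (Gop m L (H2 (P n) (Q n)) x + Bf m L x <= Gop m L (H2 (P (S n)) (Q (S n))) x + Bf m L x).
      apply Rplus_le_compat_r. apply (Gop_mono m L Hm HL0); [apply gcont_H2; auto | apply gcont_H2; auto | | auto].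
      intros y Hy. destruct (IHn y Hy). destruct (box n y Hy). destruct (box (S n) y Hy).
      unfold H2. apply (H2v_mono b abar); auto; lra.
Qed.

Definition Pl x := real (Lim_seq (fun n => P n x)).
Definition Ql x := real (Lim_seq (fun n => Q n x)).

Lemma Pl_lim x : 0 <= x <= L -> is_lim_seq (fun n => P n x) (Pl x).
Proof. intros Hx. apply Lim_seq_correct'. apply (ex_finite_lim_seq_decr _ 0).
  intros n; apply (mono n x Hx). intros n; apply (box n x Hx). Qed.
Lemma Ql_lim x : 0 <= x <= L -> is_lim_seq (fun n => Q n x) (Ql x).
Proof. intros Hx. apply Lim_seq_correct'. apply (ex_finite_lim_seq_incr _ 1).
  intros n; apply (mono n x Hx). intros n; apply (box n x Hx). Qed.

Lemma Pl_bnd x : 0 <= x <= L -> sf x <= Pl x <= 1.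
Proof.
  intros Hx. split.
  - assert (Rbar_le (sf x) (Pl x)). { apply (is_lim_seq_le (fun _ => sf x) (fun n => P n x)).
      intros n. destruct (Inv_all n) as [_ [_ [Hb' _]]]. apply (Hb' x Hx). apply is_lim_seq_const. apply Pl_lim; auto. }
    simpl in H; auto.
  - pose proof (is_lim_seq_decr_compare (fun n => P n x) (Pl x) (Pl_lim x Hx) (fun n => proj1 (mono n x Hx)) 0%nat).
    simpl in H. unfold P in H; simpl in H. auto.
Qed.
Lemma Ql_bnd x : 0 <= x <= L -> 0 <= Ql x <= 1.
Proof.
  intros Hx. split.
  - pose proof (is_lim_seq_incr_compare (fun n => Q n x) (Ql x) (Ql_lim x Hx) (fun n => proj2 (mono n x Hx)) 0%nat).
    simpl in H. unfold Q in H; simpl in H. auto.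
  - assert (Rbar_le (Ql x) 1). { apply (is_lim_seq_le (fun n => Q n x) (fun _ => 1)).
      intros n. apply (box n x Hx). apply Ql_lim; auto. apply is_lim_seq_const. }
    simpl in H; auto.
Qed.

Lemma lim_lip (u : nat -> R -> R) (l : R -> R) : (forall x, 0 <= x <= L -> is_lim_seq (fun n => u n x) (l x)) ->
  (forall n, Lip (u n)) -> Lip l.
Proof.
  intros Hl Hu x y Hx Hy. apply Rabs_le.
  assert (Hlim : is_lim_seq (fun n => u n x - u n y) (l x - l y)).
  { apply (is_lim_seq_minus' _ _ (l x) (l y)); apply Hl; auto. }
  split.
  - assert (Rbar_le (- (KK * Rabs (x - y))) (l x - l y)).
    { apply (is_lim_seq_le (fun _ => - (KK * Rabs (x - y))) (fun n => u n x - u n y)); auto.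
      intros n. pose proof (Hu n x y Hx Hy). apply Rabs_le_between in H. lra. apply is_lim_seq_const. }
    simpl in H; auto.
  - assert (Rbar_le (l x - l y) (KK * Rabs (x - y))).
    { apply (is_lim_seq_le (fun n => u n x - u n y) (fun _ => KK * Rabs (x - y))); auto.
      intros n. pose proof (Hu n x y Hx Hy). apply Rabs_le_between in H. lra. apply is_lim_seq_const. }
    simpl in H; auto.
Qed.

Lemma Pl_lip : Lip Pl.
Proof. apply (lim_lip P). apply Pl_lim. intros n; apply (Inv_all n). Qed.
Lemma Ql_lip : Lip Ql.
Proof. apply (lim_lip Q). apply Ql_lim. intros n; apply (Inv_all n). Qed.

Lemma gcont_lip f : Lip f -> gcont L f.
Proof.
  intros Hf y. apply (lip_cont (fun z => f (cl L z)) KK). intros a c.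
  eapply Rle_trans. apply Hf; apply cl_bnd; apply L_pos. apply Rmult_le_compat_l. apply KK_pos.
  pose proof (cl_lip L L_pos a c). lra.
Qed.
Lemma gcont_Pl : gcont L Pl. Proof. apply gcont_lip, Pl_lip. Qed.
Lemma gcont_Ql : gcont L Ql. Proof. apply gcont_lip, Ql_lip. Qed.

Lemma unifP e : 0 < e -> exists N, forall n, (N <= n)%nat -> forall x, 0 <= x <= L -> Rabs (P n x - Pl x) <= e.
Proof. intros. apply (unif_conv P Pl KK L); auto. apply KK_pos. apply Pl_lim. intros n; apply (Inv_all n). apply Pl_lip. Qed.
Lemma unifQ e : 0 < e -> exists N, forall n, (N <= n)%nat -> forall x, 0 <= x <= L -> Rabs (Q n x - Ql x) <= e.
Proof. intros. apply (unif_conv Q Ql KK L); auto. apply KK_pos. apply Ql_lim. intros n; apply (Inv_all n). apply Ql_lip. Qed.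

Lemma gcont_minus g1 g2 : gcont L g1 -> gcont L g2 -> gcont L (fun y => g1 y - g2 y).
Proof. intros H1' H2' y. apply cMi. exact (H1' y). exact (H2' y). Qed.

Lemma Pl_fix x : 0 <= x <= L -> Pl x = Gop m L (H1 Pl Ql) x.
Proof.
  intros Hx. apply Rminus_diag_uniq. pose proof CG_pos. pose proof A0_pos.
  apply (eps_zero _ (1 + CG m L * (A0 b * 2))). assert (0 <= CG m L * (A0 b * 2)) by (apply Rmult_le_pos; lra). lra.
  intros e He. destruct (unifP e He) as [N1 HN1]. destruct (unifQ e He) as [N2 HN2].
  set (n := Nat.max N1 N2).
  assert (Hg1 : gcont L (H1 (P n) (Q n))) by (apply gcont_H1; apply Inv_all).
  assert (Hg2 : gcont L (H1 Pl Ql)) by (apply gcont_H1; [apply gcont_Pl|apply gcont_Ql]).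
  replace (Pl x - Gop m L (H1 Pl Ql) x) with (- (P (S n) x - Pl x) + (Gop m L (H1 (P n) (Q n)) x - Gop m L (H1 Pl Ql) x))
    by (rewrite P_S; ring).
  eapply Rle_trans. apply Rabs_triang. rewrite Rabs_Ropp.
  rewrite (Gop_minus m L _ _ Hg1 Hg2).
  assert (Rabs (P (S n) x - Pl x) <= e) by (apply HN1; [lia|auto]).
  assert (Rabs (Gop m L (fun y => H1 (P n) (Q n) y - H1 Pl Ql y) x) <= CG m L * (A0 b * (e + e))).
  { apply (Gop_bnd m L m_pos L_pos). apply gcont_minus; auto.
    intros y Hy. unfold H1. eapply Rle_trans. apply (H1v_lip b abar); auto.
    apply box; auto. apply box; auto. destruct (Pl_bnd y Hy); destruct (sf_bnd y Hy); split; lra. apply Ql_bnd; auto.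
    apply Rmult_le_compat_l. lra. apply Rplus_le_compat. apply HN1; [lia|auto]. apply HN2; [lia|auto]. auto. }
  lra.
Qed.

Lemma Ql_fix x : 0 <= x <= L -> Ql x = Gop m L (H2 Pl Ql) x + Bf m L x.
Proof.
  intros Hx. apply Rminus_diag_uniq. pose proof CG_pos. pose proof A0_pos.
  apply (eps_zero _ (1 + CG m L * (A0 b * 2))). assert (0 <= CG m L * (A0 b * 2)) by (apply Rmult_le_pos; lra). lra.
  intros e He. destruct (unifP e He) as [N1 HN1]. destruct (unifQ e He) as [N2 HN2].
  set (n := Nat.max N1 N2).
  assert (Hg1 : gcont L (H2 (P n) (Q n))) by (apply gcont_H2; apply Inv_all).
  assert (Hg2 : gcont L (H2 Pl Ql)) by (apply gcont_H2; [apply gcont_Pl|apply gcont_Ql]).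
  replace (Ql x - (Gop m L (H2 Pl Ql) x + Bf m L x)) with (- (Q (S n) x - Ql x) + (Gop m L (H2 (P n) (Q n)) x - Gop m L (H2 Pl Ql) x))
    by (rewrite Q_S; ring).
  eapply Rle_trans. apply Rabs_triang. rewrite Rabs_Ropp.
  rewrite (Gop_minus m L _ _ Hg1 Hg2).
  assert (Rabs (Q (S n) x - Ql x) <= e) by (apply HN2; [lia|auto]).
  assert (Rabs (Gop m L (fun y => H2 (P n) (Q n) y - H2 Pl Ql y) x) <= CG m L * (A0 b * (e + e))).
  { apply (Gop_bnd m L m_pos L_pos). apply gcont_minus; auto.
    intros y Hy. unfold H2. eapply Rle_trans. apply (H2v_lip b abar); auto.
    apply box; auto. apply box; auto. destruct (Pl_bnd y Hy); destruct (sf_bnd y Hy); split; lra. apply Ql_bnd; auto.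
    apply Rmult_le_compat_l. lra. apply Rplus_le_compat. apply HN1; [lia|auto]. apply HN2; [lia|auto]. auto. }
  lra.
Qed.

Lemma main_exists : exists (phi phi1 phi2 psi psi1 psi2 : R -> R),
    classical_C2 L phi phi1 phi2 /\ classical_C2 L psi psi1 psi2 /\
    (forall x, 0 < x < L ->
       - phi2 x = phi x * (1 - phi x - abar * psi x) /\
       - psi2 x = psi x * (1 - b * phi x - psi x)) /\
    phi 0 = 0 /\ phi L = 0 /\ psi 0 = 1 /\ psi L = 1 /\
    (forall x, 0 < x < L -> 0 < phi x < 1 /\ 0 < psi x < 1).
Proof.
  pose proof m_pos as Hm. pose proof L_pos as HL0. pose proof mm_eq as Hmm.
  set (h1 := H1 Pl Ql). set (h2 := H2 Pl Ql).
  assert (Hg1 : gcont L h1) by (apply gcont_H1; [apply gcont_Pl|apply gcont_Ql]).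
  assert (Hg2 : gcont L h2) by (apply gcont_H2; [apply gcont_Pl|apply gcont_Ql]).
  exists (Gop m L h1), (G1 m L h1), (fun x => m * m * Gop m L h1 x - h1 (cl L x)),
    (fun x => Gop m L h2 x + Bf m L x), (fun x => G1 m L h2 x + B1 m L x),
    (fun x => (m * m * Gop m L h2 x - h2 (cl L x)) + m * m * Bf m L x).
  assert (Ephi : forall x, 0 <= x <= L -> Gop m L h1 x = Pl x) by (intros; symmetry; apply Pl_fix; auto).
  assert (Epsi : forall x, 0 <= x <= L -> Gop m L h2 x + Bf m L x = Ql x) by (intros; symmetry; apply Ql_fix; auto).
  split; [|split; [|split; [|split; [|split; [|split; [|split]]]]]].
  - split.
    + intros x Hx. apply continuity_pt_filterlim. apply Gop_cpt; auto.
    + intros x Hx. split; [apply Gop_der; auto | split; [apply (G1_der m L Hm HL0); auto|]].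
      apply cMi. apply cM. apply cC. apply continuity_pt_filterlim. apply Gop_cpt; auto. exact (Hg1 x).
  - split.
    + intros x Hx. apply continuity_pt_filterlim. apply continuity_pt_plus. apply Gop_cpt; auto. apply Bf_cpt.
    + intros x Hx. split; [apply der_plus; [apply Gop_der; auto | apply Bf_der] | split].
      apply der_plus. apply (G1_der m L Hm HL0); auto. apply Bf_der.
      apply cP. apply cMi. apply cM. apply cC. apply continuity_pt_filterlim. apply Gop_cpt; auto. exact (Hg2 x).
      apply cM. apply cC. apply continuity_pt_filterlim. apply Bf_cpt.
  - intros x Hx. rewrite (cl_in L x) by lra. split.
    + rewrite Epsi, Ephi by lra. unfold h1, H1, H1v. rewrite Hmm. ring.
    + replace (- ((m * m * Gop m L h2 x - h2 x) + m * m * Bf m L x)) with (- (m * m * (Gop m L h2 x + Bf m L x) - h2 x)) by ring.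
      rewrite Epsi, Ephi by lra. unfold h2, H2, H2v. rewrite Hmm. ring.
  - apply Gop_0.
  - apply Gop_L.
  - rewrite Gop_0, (Bf_0 m L Hm HL0). ring.
  - rewrite Gop_L, (Bf_L m L Hm HL0). ring.
  - intros x Hx. assert (Hx' : 0 <= x <= L) by lra.
    assert (HP1 : Gop m L h1 x <= Gop m L (fun _ => m * m) x).
    { apply (Gop_mono m L Hm HL0); auto. apply gcont_const.
      intros y Hy. rewrite Hmm. unfold h1, H1. destruct (Pl_bnd y Hy). destruct (sf_bnd y Hy).
      apply (H1v_bnd b abar); auto. lra. apply Ql_bnd; auto. }
    rewrite Gop_Mx in HP1 by auto.
    assert (HQ0 : 0 <= Gop m L h2 x).
    { apply (Gop_nonneg m L Hm HL0); auto. intros y Hy. unfold h2, H2. destruct (Pl_bnd y Hy). destruct (sf_bnd y Hy).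
      apply (H2v_bnd b abar); auto. lra. apply Ql_bnd; auto. }
    pose proof (Bf_pos x Hx'). pose proof (sf_pos x Hx). pose proof (Pl_bnd x Hx').
    set (c := b * beta m L / (kk * kk + MM b)).
    assert (Hc : 0 < c). { unfold c. pose proof (beta_pos m L Hm HL0). pose proof kk_pos. pose proof MM_pos.
      apply Rdiv_lt_0_compat. nra. nra. }
    assert (Hz : c * sf x <= Gop m L (fun y => m * m - h2 y) x).
    { apply (Gop_ge m L Hm HL0 (fun y => c * sf y) (fun y => c * sf1 y) (fun y => c * (- (kk * kk) * sf y))); auto.
      - apply gcont_minus; auto. apply gcont_const.
      - intros y _. apply (der_cpt _ _ (c * sf1 y)). apply der_scal. apply sf_der.
      - intros y _. split; apply der_scal; apply sf_der.
      - intros y Hy. rewrite Hmm. unfold h2, H2.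
        assert (Hy' : 0 <= y <= L) by lra.
        pose proof (Pl_bnd y Hy'). pose proof (sf_bnd y Hy'). pose proof (Ql_bnd y Hy').
        pose proof (H2v_final b abar Hb Ha0 Ha1 (Pl y) (Ql y) ltac:(lra) ltac:(lra)).
        assert (Hbeta : beta m L <= Ql y).
        { rewrite <- (Epsi y Hy'). pose proof (Bf_ge m L Hm HL0 y Hy').
          assert (0 <= Gop m L h2 y).
          { apply (Gop_nonneg m L Hm HL0); auto. intros z Hz. unfold h2, H2. destruct (Pl_bnd z Hz). destruct (sf_bnd z Hz).
            apply (H2v_bnd b abar); auto. lra. apply Ql_bnd; auto. }
          lra. }
        assert (E : - (c * (- (kk * kk) * sf y)) + MM b * (c * sf y) = b * beta m L * sf y).
        { unfold c. pose proof kk_pos. pose proof MM_pos. field. nra. }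
        rewrite E. pose proof (beta_pos m L Hm HL0).
        assert (b * beta m L * sf y <= b * Pl y * Ql y).
        { rewrite Rmult_assoc, (Rmult_assoc b (Pl y)). apply Rmult_le_compat_l. lra.
          rewrite (Rmult_comm (beta m L)). apply Rmult_le_compat; lra. }
        lra.
      - rewrite sf_0. lra.
      - rewrite sf_L. lra. }
    rewrite <- (Gop_minus m L _ _ (gcont_const L (m * m)) Hg2) in Hz.
    rewrite Gop_Mx in Hz by auto.
    pose proof (Ephi x Hx'). pose proof (Epsi x Hx').
    assert (0 < c * sf x) by nra.
    split; split; lra.
Qed.

End Main.


Theorem proposition4 (b L abar : R) :
  1 < b -> PI < L -> 0 < abar -> abar < 1 - PI ^ 2 / L ^ 2 ->
  exists (phi phi1 phi2 psi psi1 psi2 : R -> R),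
    classical_C2 L phi phi1 phi2 /\ classical_C2 L psi psi1 psi2 /\
    (forall x, 0 < x < L ->
       - phi2 x = phi x * (1 - phi x - abar * psi x) /\
       - psi2 x = psi x * (1 - b * phi x - psi x)) /\
    phi 0 = 0 /\ phi L = 0 /\ psi 0 = 1 /\ psi L = 1 /\
    (forall x, 0 < x < L -> 0 < phi x < 1 /\ 0 < psi x < 1).
Proof.
  intros Hb HL Ha0 Hab. eapply main_exists; eauto.
Qed.
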